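(* Let $p:[0,\infty)\to\mathbb{R}$ be concave, increasing and continuous, and suppose its right derivative at $0$, $p'(0+)$, exists and satisfies $p'(0+)>0$. Then the function $F:\mathbb{R}^n\to\mathbb{R}$, $$F(x)=p'(0+)\|x\|_1-\sum_{i=1}^n p(|x_i|),$$ is convex on $\mathbb{R}^n$. *)

(* Defs.v *)
From HB Require Import structures.
From mathcomp Require Import all_boot all_order all_algebra.
From mathcomp Require Import all_classical all_reals all_analysis.
Set Implicit Arguments. Unset Strict Implicit. Unset Printing Implicit Defensive.
Import Order.TTheory GRing.Theory Num.Theory.
Import numFieldNormedType.Exports.
Local Open Scope classical_set_scope.
Local Open Scope ring_scope.

Definition concave_on_nonneg (R : realType) (p : R -> R) : Prop :=
  forall (x y t : R), 0 <= x -> 0 <= y -> 0 <= t -> t <= 1 ->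
    (1 - t) * p x + t * p y <= p ((1 - t) * x + t * y).

Definition increasing_on_nonneg (R : realType) (p : R -> R) : Prop :=
  forall x y : R, 0 <= x -> x <= y -> p x <= p y.

Definition right_deriv_at0 (R : realType) (p : R -> R) (d : R) : Prop :=
  (fun h : R => (p h - p 0) / h) x @[x --> (0:R)^'+] --> d.

Definition convex_on_Rn (R : realType) (n : nat) (F : 'rV[R]_n -> R) : Prop :=
  forall (x y : 'rV[R]_n) (t : R), 0 <= t -> t <= 1 ->
    F ((1 - t) *: x + t *: y) <= (1 - t) * F x + t * F y.

Definition Fpen (R : realType) (n : nat) (p : R -> R) (d : R) (x : 'rV[R]_n) : R :=
  d * (\sum_(i < n) `|x ord0 i|) - \sum_(i < n) p `|x ord0 i|.

(* Main.v *)
Require Import Defs.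
From HB Require Import structures.
From mathcomp Require Import all_boot all_order all_algebra.
From mathcomp Require Import all_classical all_reals all_analysis.
From mathcomp Require Import ring lra.
Import Order.TTheory GRing.Theory Num.Theory.
Import numFieldNormedType.Exports.
Local Open Scope classical_set_scope.
Local Open Scope ring_scope.

Lemma slope_bound (R : realType) (p : R -> R) (d : R) :
  concave_on_nonneg p -> right_deriv_at0 p d ->
  forall x y : R, 0 <= x -> x <= y -> p y - p x <= d * (y - x).
Proof.
move=> pc pd x y x0 xy.
have [y0|ypos] := eqVneq y 0.
  have x00 : x = 0 by apply/eqP; rewrite eq_le x0 -y0 xy.
  by rewrite y0 x00 !subrr mulr0.
have y0' : 0 < y by rewrite lt_def ypos (le_trans x0 xy).
set s := (p y - p 0) / y.
have C1 : forall h, 0 < h -> h <= y -> s <= (p h - p 0) / h.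
  move=> h h0 hy.
  have := pc 0 y (h / y) (lexx 0) (ltW y0') (divr_ge0 (ltW h0) (ltW y0')).
  rewrite ler_pdivrMr // mul1r => /(_ hy).
  have -> : (1 - h / y) * 0 + h / y * y = h by field; rewrite gt_eqF.
  move=> H; rewrite ler_pdivlMr //.
  have -> : s * h = (h / y) * (p y - p 0) by rewrite /s; field; rewrite gt_eqF.
  have E2 : (1 - h / y) * p 0 + h / y * p y = p 0 + (h / y) * (p y - p 0)
    by field; rewrite gt_eqF.
  rewrite E2 in H.
  lra.
have C2 : s <= d.
  have <- : lim ((fun h : R => (p h - p 0) / h) x @[x --> (0:R)^'+]) = d.
    exact: cvg_lim.
  apply: limr_ge; first by apply/cvg_ex; exists d; exact: pd.
  near=> h; apply: C1; first by near: h; exact: nbhs_right_gt.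
  by apply: ltW; near: h; exact: nbhs_right_lt.
have C3 : p y - p x <= (y - x) * s.
  have := pc 0 y (x / y) (lexx 0) (ltW y0') (divr_ge0 x0 (ltW y0')).
  rewrite ler_pdivrMr // mul1r => /(_ xy).
  have -> : (1 - x / y) * 0 + x / y * y = x by field; rewrite gt_eqF.
  have -> : (y - x) * s = (1 - x / y) * (p y - p 0) by rewrite /s; field; rewrite gt_eqF.
  move=> H; lra.
apply: (le_trans C3); rewrite mulrC; apply: ler_wpM2r => //; lra.
Unshelve. all: by end_near.
Qed.

Theorem proposition3p1 (R : realType) (n : nat) (p : R -> R) (d : R) :
  concave_on_nonneg p ->
  increasing_on_nonneg p ->
  {within `[0, +oo[, continuous p} ->
  right_deriv_at0 p d ->
  0 < d ->
  convex_on_Rn (@Fpen R n p d).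
Proof.
move=> pc _ _ pd d0 x y t t0 t1.
set g := fun u : R => d * u - p u.
have gmono : forall a b, 0 <= a -> a <= b -> g a <= g b.
  move=> a b a0 ab; have := @slope_bound R p d pc pd a b a0 ab; rewrite /g; lra.
have gconv : forall a b, 0 <= a -> 0 <= b ->
    g ((1 - t) * a + t * b) <= (1 - t) * g a + t * g b.
  move=> a b a0 b0; have := pc a b t a0 b0 t0 t1; rewrite /g => H.
  have -> : (1 - t) * (d * a - p a) + t * (d * b - p b) =
     d * ((1 - t) * a + t * b) - ((1 - t) * p a + t * p b) by ring.
  lra.
have E : forall z : 'rV[R]_n, Fpen p d z = \sum_(i < n) g `|z ord0 i|.
  by move=> z; rewrite /Fpen /g mulr_sumr -sumrB.
rewrite !E mulr_sumr mulr_sumr -big_split /=; apply: ler_sum => i _.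
rewrite !mxE.
have t1' : 0 <= 1 - t by rewrite subr_ge0.
apply: le_trans (gconv _ _ (normr_ge0 _) (normr_ge0 _)).
apply: gmono; first exact: normr_ge0.
apply: (le_trans (ler_normD _ _)).
by rewrite !normrM (ger0_norm t0) (ger0_norm t1').
Qed.
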